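(* Let $P=(P_1,\ldots,P_n)$ be a reduced profile of linear orders on a finite set $A$ with voter set $N=\{1,\ldots,n\}$, and suppose $P$ is single-crossing with respect to a tree $T$ on vertex set $N$ which is minimal for $P$. Then a voter $i$ is a leaf (vertex of degree 1) of $T$ if and only if there exist alternatives $a,b\in A$ such that $a\succ_i b$ and $b\succ_j a$ for all $j\in N\setminus\{i\}$.
   Context: Voter $i$ prefers $a$ to $b$ is written $a\succ_i b$. A profile is reduced if no two voters have identical linear orders. Given a tree $T=(N,E)$, the profile is single-crossing with respect to $T$ if for every pair of distinct alternatives $a,b$ one of the following holds: (i) there is an edge $e\in E$ (an ''$ab$-cut'') such that, removing $e$ from $T$, the two resulting subtrees have vertex sets $V_1,V_2$ with all voters in $V_1$ preferring $a$ to $b$ and all voters in $V_2$ preferring $b$ to $a$; or (ii) all voters prefer $a$ to $b$, or all voters prefer $b$ to $a$. $T$ is minimal with respect to $P$ if every edge of $T$ is an $ab$-cut for some pair of alternatives $a,b$. *)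

(* Defs.v *)
From mathcomp Require Import all_boot.
Set Implicit Arguments. Unset Strict Implicit. Unset Printing Implicit Defensive.

(* A (strict) linear order on a finite set A, as a boolean relation:
   r a b means "a is preferred to b". *)
Definition linear_order (A : finType) (r : rel A) : Prop :=
  [/\ irreflexive r, transitive r & forall a b, a != b -> r a b || r b a].

(* A profile: voter i's preference is P i. Voters are 'I_n = {0..n-1}. *)
Definition profile (n : nat) (A : finType) (P : 'I_n -> rel A) : Prop :=
  forall i, linear_order (P i).

Definition reduced (n : nat) (A : finType) (P : 'I_n -> rel A) : Prop :=
  forall i j, i != j -> exists a b, P i a b != P j a b.

Definition remove_edge (n : nat) (E : rel 'I_n) (u v : 'I_n) : rel 'I_n :=
  [rel x y | E x y && ~~ (((x == u) && (y == v)) || ((x == v) && (y == u)))].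

(* A tree: simple, connected graph in which every edge is a bridge
   (i.e. a minimally connected graph). *)
Definition is_tree (n : nat) (E : rel 'I_n) : Prop :=
  [/\ irreflexive E, symmetric E,
      (forall x y, connect E x y)
    & forall u v, E u v -> ~~ connect (remove_edge E u v) u v].

Definition is_cut (n : nat) (A : finType) (P : 'I_n -> rel A) (E : rel 'I_n)
    (u v : 'I_n) (a b : A) : Prop :=
  E u v /\
  (forall x, connect (remove_edge E u v) u x -> P x a b) /\
  (forall x, connect (remove_edge E u v) v x -> P x b a).

Definition single_crossing (n : nat) (A : finType) (P : 'I_n -> rel A)
    (E : rel 'I_n) : Prop :=
  forall a b : A, a != b ->
    (exists u v, is_cut P E u v a b)
    \/ (forall i, P i a b) \/ (forall i, P i b a).

Definition minimal_tree (n : nat) (A : finType) (P : 'I_n -> rel A)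
    (E : rel 'I_n) : Prop :=
  forall u v, E u v -> exists a b : A, is_cut P E u v a b.

Definition is_leaf (n : nat) (E : rel 'I_n) (i : 'I_n) : bool :=
  #|[set j | E i j]| == 1.

(* Main.v *)
Require Import Defs.
From mathcomp Require Import all_boot.

Lemma asym_pref (n : nat) (A : finType) (P : 'I_n -> rel A) :
  profile P -> forall x a b, P x a b -> P x b a -> False.
Proof.
move=> HP x a b h1 h2; case: (HP x) => irr tr _.
by have := tr _ _ _ h1 h2; rewrite irr.
Qed.

Arguments asym_pref {n A P}.

Lemma leaf_comp (n : nat) (E : rel 'I_n) (i k : 'I_n) :
  (forall y, E i y -> y = k) ->
  forall j, connect E k j -> j != i -> connect (remove_edge E i k) k j.
Proof.
move=> nb j /connectP [p pth ->] ji.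
suff: forall x, (x == i) || connect (remove_edge E i k) k x -> path E x p ->
    (last x p == i) || connect (remove_edge E i k) k (last x p).
  by move=> /(_ k); rewrite connect0 orbT => /(_ isT pth); rewrite (negbTE ji).
elim: p {pth ji} => [|y p IH] x //= Hx /andP[Exy pth].
apply: IH pth.
case: (eqVneq x i) => [xi|xi].
  by subst x; rewrite (nb y Exy) connect0 orbT.
move: Hx; rewrite (negbTE xi) /= => Hx.
case: (eqVneq y i) => [yi|yi]; first by rewrite yi ?eqxx.
apply/orP; right; apply: connect_trans Hx (connect1 _).
by rewrite /remove_edge /= Exy (negbTE xi) (negbTE yi) /= andbF.
Qed.

Theorem proposition1 (n : nat) (A : finType) (P : 'I_n -> rel A) (E : rel 'I_n) :
  1 < n ->
  profile P -> reduced P ->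
  is_tree E -> single_crossing P E -> minimal_tree P E ->
  forall i : 'I_n,
    is_leaf E i <-> exists a b : A, P i a b /\ forall j, j != i -> P j b a.
Proof.
move=> Hn HP Hred [irr sym conn bridge] SC MT i; split.
- move=> /cards1P [k Hk].
  have nb : forall y, E i y -> y = k.
    move=> y Ey; have: y \in [set j | E i j] by rewrite inE.
    by rewrite Hk inE => /eqP.
  have : k \in [set j | E i j] by rewrite Hk set11.
  rewrite inE => Eik.
  case: (MT i k Eik) => a [b [_ [Hu Hv]]].
  exists a, b; split; first exact: Hu _ (connect0 _ _).
  move=> j ji; apply: Hv; exact: leaf_comp nb j (conn k j) ji.
- case=> a [b [Hi Hj]].
  have ab : a != b.
    by apply/eqP => eab; move: Hi; rewrite eab; case: (HP i) => irr' _ _; rewrite irr'.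
  have [j ji] : exists j : 'I_n, j != i.
    have h0 : 0 < n by apply: ltn_trans Hn.
    case: (eqVneq i (Ordinal h0)) => [e|ne]; last by exists (Ordinal h0); rewrite eq_sym.
    exists (Ordinal Hn); apply/eqP => e'; move: e; rewrite -e' => /(congr1 val).
    by [].
  have [k Eik] : exists k, E i k.
    move: (conn i j) => /connectP [[|k p] /= pth ej].
      by rewrite ej eqxx in ji.
    by case/andP: pth => ? _; exists k.
  apply/cards1P; exists k; apply/setP => y; rewrite !inE.
  apply/idP/eqP => [Eiy|->//].
  case: (eqVneq y k) => // yk; exfalso.
  case: (SC a b ab) => [[u [v [Euv [Hu Hv]]]] | [Hall|Hall]].
  + case: (eqVneq u i) => [ui|ui]; last first.
      exact: asym_pref HP _ _ _ (Hu _ (connect0 _ _)) (Hj _ ui).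
    subst u.
    have vi : v != i by apply/eqP => e; rewrite e irr in Euv.
    have [w [Eiw wv]] : exists w, E i w /\ w != v.
      case: (eqVneq y v) => [yv|yv]; last by exists y.
      by exists k; split=> //; rewrite -yv eq_sym.
    have wi : w != i by apply/eqP => e; rewrite e irr in Eiw.
    have iv : (i == v) = false by rewrite eq_sym (negbTE vi).
    have cw : connect (remove_edge E i v) i w.
      by apply: connect1; rewrite /remove_edge /= Eiw (negbTE wv) iv /= andbF.
    exact: (asym_pref HP _ _ _ (Hu w cw) (Hj w wi)).
  + exact: asym_pref HP _ _ _ (Hall j) (Hj j ji).
  + exact: asym_pref HP _ _ _ Hi (Hall i).
Qed.
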